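(* Let $A,L,\ddot L,G,\langle A_G\mid R_G\rangle,X=A\cup A_G,\mathsf f,\check{\mathsf f}$ be as in the context, and let $T$ be the semigroup defined by the presentation $\langle X\mid R_G\cup R_{\mathsf f}\rangle$. Then for every word $w\in X^+$, $w=\check{\mathsf f}(w)$ holds in $T$.
   Context: Let $A$ be an alphabet; for $w=a_1\cdots a_n\in A^+$, $w[p,q]=a_p\cdots a_q$, $w_\alpha=w[1,n-1]$, $w_\omega=w[2,n]$. $L\subseteq A^+$ is a non-empty factorial language (closed under non-empty factors) with $A\subseteq L$, $L^1=L\cup\{1\}$, and $\ddot L=\{v\in A^+: v\notin L,\ v_\alpha,v_\omega\in L\}$. For $w\in L$, $\mathrm{sc}_L[w]=(w)$; for $w\notin L$, letting $w[p_1,q_1],\dots,w[p_m,q_m]$ be all occurrences in $w$ of factors in $\ddot L$ from left to right, $\ddot w_i=w[p_i,q_i]$, $w_0=w[1,q_1-1]$, $w_m=w[p_m+1,n]$, $w_i=w[p_i+1,q_{i+1}-1]$ ($0<i<m$), and $\mathrm{sc}_L[w]=(w_0,\ddot w_1,w_1,\dots,\ddot w_m,w_m)$. $G$ is a group with semigroup presentation $\langle A_G\mid R_G\rangle$, $A_G\cap A=\emptyset$; each $g\in G$ is identified with a fixed word of $A_G^+$ representing it, and $e$ denotes the fixed word representing $1_G$. $X=A\cup A_G$, $\mathsf f:L\cup\ddot L\to G$ is a function, and $R_{\mathsf f}$ consists of the relations $eue=\mathsf f(u)$ for $u\in L$ and $\ddot v=\ddot v_\alpha\,\mathsf f(\ddot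 v)\,\ddot v_\omega$ for $\ddot v\in\ddot L$ (elements of $G$ written as their fixed representative words). $\hat{\mathsf f}:A^*\to G$: $\hat{\mathsf f}(1)=1_G$, $\hat{\mathsf f}(w)=\mathsf f(w)$ for $w\in L$, else $\hat{\mathsf f}(w)=\mathsf f(w_0)\mathsf f(\ddot w_1)\mathsf f(w_1)\cdots\mathsf f(\ddot w_m)\mathsf f(w_m)$. For $w\in A^+$: $\check{\mathsf f}(w)=w$ if $w\in L$, else $\check{\mathsf f}(w)=w_0\,g_w\,w_m$ with $g_w=\mathsf f(\ddot w_1)\mathsf f(w_1)\cdots\mathsf f(w_{m-1})\mathsf f(\ddot w_m)$. For $u\in A^*$: $\grave{\mathsf f}(u)=\acute{\mathsf f}(u)=u$ if $u\in L^1$; otherwise $\grave{\mathsf f}(u)=u_0(g_u\mathsf f(u_m))$, $\acute{\mathsf f}(u)=(\mathsf f(u_0)g_u)u_m$. For $w=u_0g_1u_1\cdots g_nu_n\in X^+\setminus A^+$ ($u_0,u_n\in A^*$, $u_1,\dots,u_{n-1}\in A^+$, $g_i\in A_G^+$): $\check{\mathsf f}(w)=\grave{\mathsf f}(u_0)g_1\hat{\mathsf f}(u_1)\cdots\hat{\mathsf f}(u_{n-1})g_n\acute{\mathsf f}(u_n)$, with adjacent group factors multiplied in $G$ and replaced by the fixed representative of the product. *)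

(* Defs.v *)
From HB Require Import structures.
From mathcomp Require Import ssreflect ssrfun ssrbool eqtype ssrnat seq choice monoid.
Set Implicit Arguments.
Unset Strict Implicit.
Unset Printing Implicit Defensive.

(* Words are [seq]s; A^+ = nonempty seqs.  Positions below are 0-based and
   [factor w i j] is the factor of w occupying positions i, ..., j-1
   (i.e. w[i+1, j] in the paper's 1-based notation). *)

(* For relations between nonempty words, restricted to
   nonempty words it is the equality of the semigroup <X | R>. *)
Inductive thue (X : Type) (R : seq X -> seq X -> Prop) : seq X -> seq X -> Prop :=
| thue_refl u : thue R u u
| thue_sym u v : thue R u v -> thue R v u
| thue_trans u v w : thue R u v -> thue R v w -> thue R u w
| thue_step p q u v : R u v -> thue R (p ++ u ++ q) (p ++ v ++ q).

Section Lang.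
Variable A : Type.
Variable L : pred (seq A).

Definition w_alpha (v : seq A) := take (size v).-1 v.
Definition w_omega (v : seq A) := behead v.

Definition Ldd (v : seq A) : bool :=
  [&& ~~ nilp v, ~~ L v, L (w_alpha v) & L (w_omega v)].

Definition factor (w : seq A) (i j : nat) := take (j - i) (drop i w).

Definition occs (w : seq A) : seq (nat * nat) :=
  [seq ij <- [seq (i, j) | i <- iota 0 (size w), j <- iota i.+1 (size w - i)]
     | Ldd (factor w ij.1 ij.2)].

Definition sc_dd (w : seq A) := [seq factor w ij.1 ij.2 | ij <- occs w].
Definition sc_first (w : seq A) := factor w 0 (head (0, 0) (occs w)).2.-1.
Definition sc_last (w : seq A) := factor w (last (0, 0) (occs w)).1.+1 (size w).
Definition sc_gaps (w : seq A) :=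
  [seq factor w p.1.1.+1 p.2.2.-1 | p <- zip (occs w) (behead (occs w))].
(* (\ddot w_1, w_1, ..., w_{m-1}, \ddot w_m) *)
Definition sc_mid (w : seq A) :=
  behead (flatten [seq [:: p.1; p.2] | p <- zip (sc_first w :: sc_gaps w) (sc_dd w)]).

Definition sc (w : seq A) : seq (seq A) :=
  if L w then [:: w] else sc_first w :: rcons (sc_mid w) (sc_last w).
End Lang.

Arguments Ldd {A} L v.

Section Functions.
Variables (A AG : Type) (G : groupType).
Variable L : pred (seq A).
Variable f : seq A -> G.
Variable gen : AG -> G.
Variable rep : G -> seq AG.

Local Open Scope group_scope.

Definition prodG (s : seq G) : G := foldr (fun g h => g * h) 1 s.

Definition evG (u : seq AG) : G := prodG (map gen u).

Definition fhat (w : seq A) : G :=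
  if w is [::] then 1 else prodG (map f (sc L w)).

Definition gw (w : seq A) : G := prodG (map f (sc_mid L w)).

Definition X := (A + AG)%type.

(* tokens: letters of A or elements of G (to be replaced by their words) *)
Definition tok := (A + G)%type.

Definition fcheckA_tok (w : seq A) : seq tok :=
  if L w then map inl w
  else map inl (sc_first L w) ++ [:: inr (gw w)] ++ map inl (sc_last L w).

Definition fgrave_tok (u : seq A) : seq tok :=
  if nilp u || L u then map inl u
  else map inl (sc_first L u) ++ [:: inr (gw u * f (sc_last L u))].
Definition facute_tok (u : seq A) : seq tok :=
  if nilp u || L u then map inl u
  else [:: inr (f (sc_first L u) * gw u)] ++ map inl (sc_last L u).

Fixpoint runs (w : seq X) : seq (seq A + seq AG) :=
  match w with
  | [::] => [::]
  | x :: w' =>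
      let r := runs w' in
      match x, r with
      | inl a, inl u :: r' => inl (a :: u) :: r'
      | inl a, _ => inl [:: a] :: r
      | inr b, inr g :: r' => inr (b :: g) :: r'
      | inr b, _ => inr [:: b] :: r
      end
  end.

Fixpoint merge (s : seq tok) : seq tok :=
  match s with
  | [::] => [::]
  | x :: s' =>
      match x, merge s' with
      | inr g, inr h :: r => inr (g * h) :: r
      | _, r => x :: r
      end
  end.

Definition flat (s : seq tok) : seq X :=
  flatten [seq match t with inl a => [:: inl a] | inr g => map inr (rep g) end
          | t <- s].

Definition is_letterA (x : X) : bool := if x is inl _ then true else false.
Definition letterA (x : X) : seq A := if x is inl a then [:: a] else [::].

Definition fcheck (w : seq X) : seq X :=
  if all is_letterA w then flat (merge (fcheckA_tok (flatten (map letterA w))))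
  else
    let rs := runs w in
    let u0 := if rs is inl u :: _ then u else [::] in
    let rs1 := if rs is inl _ :: r then r else rs in
    let un := if rev rs1 is inl u :: _ then u else [::] in
    let mid := if rev rs1 is inl _ :: r then rev r else rs1 in
    let tk (r : seq A + seq AG) : tok :=
        match r with inl u => inr (fhat u) | inr g => inr (evG g) end in
    flat (merge (fgrave_tok u0 ++ map tk mid ++ facute_tok un)).

Definition RT (RG : seq AG -> seq AG -> Prop) (u v : seq X) : Prop :=
  (exists a b, RG a b /\ u = map inr a /\ v = map inr b)
  \/ (exists x, L x /\ u = map inr (rep 1) ++ map inl x ++ map inr (rep 1)
                   /\ v = map inr (rep (f x)))
  \/ (exists x, Ldd L x /\ u = map inl x
                   /\ v = map inl (w_alpha x) ++ map inr (rep (f x))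
                          ++ map inl (w_omega x)).
End Functions.

(* Main.v *)
Require Import Defs.
From mathcomp Require Import ssreflect ssrfun ssrbool eqtype ssrnat seq choice monoid.
From mathcomp Require Import path zify.
From Stdlib Require Import Setoid Morphisms.
Set Implicit Arguments.
Unset Strict Implicit.
Unset Printing Implicit Defensive.

Section Comb.
Variable A : Type.
Implicit Types (w : seq A).

Lemma factor_cat w i k j : i <= k <= j -> factor w i k ++ factor w k j = factor w i j.
Proof.
move=> /andP[ik kj]; rewrite /factor.
have -> : j - i = (k - i) + (j - k) by lia.
by rewrite takeD drop_drop subnK.
Qed.

Lemma drop_factor w i j : i <= j -> drop i w = factor w i j ++ drop j w.
Proof.
by move=> ij; rewrite /factor -{1}(cat_take_drop (j - i) (drop i w)) drop_drop subnK.
Qed.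

Lemma size_factor w i j : j <= size w -> size (factor w i j) = j - i.
Proof. by move=> js; rewrite /factor size_take_min size_drop; lia. Qed.

Lemma factor_alpha w i j : i < j -> j <= size w -> w_alpha (factor w i j) = factor w i j.-1.
Proof.
move=> ij js; rewrite /w_alpha size_factor // /factor -take_min; congr take; lia.
Qed.

Lemma factor_omega w i j : i < j -> w_omega (factor w i j) = factor w i.+1 j.
Proof.
move=> ij; rewrite /w_omega /factor.
have -> : drop i.+1 w = behead (drop i w) by rewrite -drop1 drop_drop add1n.
have -> : j - i = (j - i.+1).+1 by lia.
by case: (drop i w).
Qed.

Lemma factor_all w : factor w 0 (size w) = w.
Proof. by rewrite /factor subn0 drop0 take_size. Qed.

Lemma factor_end w i : factor w i (size w) = drop i w.
Proof. by rewrite /factor take_oversize // size_drop. Qed.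

Variable L : pred (seq A).
Hypothesis HL0 : ~~ L [::].
Hypothesis HLfact : forall x y z : seq A, y <> [::] -> L (x ++ y ++ z) -> L y.
Hypothesis HLA : forall a : A, L [:: a].


Lemma Ldd_size v : Ldd L v -> 1 < size v.
Proof.
by case: v => [|a [|b v]] //; rewrite /Ldd HLA.
Qed.

Lemma Lcat3 x y z : y <> [::] -> L (x ++ y ++ z) -> L y.
Proof. exact: HLfact. Qed.

Lemma nest w i j i' j' : j <= size w -> Ldd L (factor w i j) -> Ldd L (factor w i' j') ->
  i <= i' -> j' <= j -> i = i' /\ j = j'.
Proof.
move=> js D1 D2 ii' jj'.
have s1 := Ldd_size D1; have s2 := Ldd_size D2.
rewrite size_factor // in s1; rewrite size_factor in s2; last by lia.
have ne : factor w i' j' <> [::].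
  by move=> e; move: (Ldd_size D2); rewrite e.
have nL : ~~ L (factor w i' j') by case/and4P: D2.
case: (ltnP i i') => [lt|ge].
  case/and4P: D1 => _ _ _; rewrite factor_omega; last by lia.
  rewrite -(@factor_cat _ _ i' _); last by lia.
  rewrite -(@factor_cat _ i' j' _); last by lia.
  by move=> H; move: nL; rewrite (HLfact ne H).
have ei : i = i' by lia.
split => //; case: (ltnP j' j) => [lt|ge']; last by lia.
case/and4P: D1 => _ _; rewrite factor_alpha //; last by lia.
rewrite -(@factor_cat _ _ j' _); last by lia.
rewrite ei => H _.
have := HLfact (x := [::]) ne; rewrite /= => /(_ _ H).
by rewrite (negbTE nL).
Qed.

Lemma exists_occ w a b : a < b -> b <= size w -> ~~ L (factor w a b) ->
  exists i j, [/\ a <= i, j <= b, i < j & Ldd L (factor w i j)].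
Proof.
move: {2}(b - a) (leqnn (b - a)) => d; elim: d a b => [|d IH] a b hd ab bs nL.
  by lia.
have [e|ne] := eqVneq b a.+1.
  move: nL; subst b.
  have : size (factor w a a.+1) = 1 by rewrite size_factor //; lia.
  by case: (factor w a a.+1) => [|x [|]] // _; rewrite HLA.
case La: (L (factor w a b.-1)); last first.
  have [i [j [h1 h2 h3 h4]]] := IH a b.-1 ltac:(lia) ltac:(lia) ltac:(lia) (negbT La).
  by exists i, j; split => //; lia.
case Lb: (L (factor w a.+1 b)); last first.
  have [i [j [h1 h2 h3 h4]]] := IH a.+1 b ltac:(lia) ltac:(lia) ltac:(lia) (negbT Lb).
  by exists i, j; split => //; lia.
exists a, b; split => //.
apply/and4P; split => //.
- by rewrite /nilp size_factor //; lia.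
- by rewrite factor_alpha.
- by rewrite factor_omega.
Qed.

Lemma mem_occs w i j :
  ((i, j) \in occs L w) = [&& i < j, j <= size w & Ldd L (factor w i j)].
Proof.
rewrite /occs mem_filter /= andbC andbA; congr andb.
apply/allpairsPdep/andP => [[x [y [xi yi [-> ->]]]]|[ij js]].
  by move: xi yi; rewrite !mem_iota; lia.
by exists i, j; rewrite !mem_iota; split => //; lia.
Qed.

Definition lexlt (p q : nat * nat) := (p.1 < q.1) || ((p.1 == q.1) && (p.2 < q.2)).

Lemma pairwise_lex_map a b k : pairwise lexlt [seq (a, j) | j <- iota b k].
Proof.
elim: k b => [|k IH] b //=; rewrite IH andbT.
by apply/allP => y /mapP[j]; rewrite mem_iota => jb ->; rewrite /lexlt /= eqxx; lia.
Qed.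

Lemma pairwise_lex_all a n N :
  pairwise lexlt [seq (i, j) | i <- iota a n, j <- iota i.+1 (N - i)].
Proof.
elim: n a => [|n IH] a //=.
rewrite pairwise_cat IH pairwise_lex_map !andbT.
apply/allrelP => x y /mapP[j _ ->] /allpairsPdep[i [k [ii _ ->]]].
by move: ii; rewrite mem_iota /lexlt /=; lia.
Qed.

Lemma pairwise_occs w : pairwise lexlt (occs L w).
Proof. exact/pairwise_filter/pairwise_lex_all. Qed.

Local Notation d0 := (0, 0).

Lemma occ_prop w z : z \in occs L w ->
  [/\ z.1.+1 < z.2, z.2 <= size w & Ldd L (factor w z.1 z.2)].
Proof.
case: z => i j; rewrite mem_occs => /and3P[ij js D]; split => //.
by have := Ldd_size D; rewrite size_factor // ltn_subRL addn1.
Qed.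

Lemma occ_nth w k : k < size (occs L w) ->
  [/\ (nth d0 (occs L w) k).1.+1 < (nth d0 (occs L w) k).2,
      (nth d0 (occs L w) k).2 <= size w &
      Ldd L (factor w (nth d0 (occs L w) k).1 (nth d0 (occs L w) k).2)].
Proof. by move=> ks; apply: occ_prop; apply: mem_nth. Qed.

Lemma ordered w k l : k < l -> l < size (occs L w) ->
  (nth d0 (occs L w) k).1 < (nth d0 (occs L w) l).1 /\
  (nth d0 (occs L w) k).2 < (nth d0 (occs L w) l).2.
Proof.
move=> kl ls.
have ks : k < size (occs L w) by lia.
move/(pairwiseP d0): (pairwise_occs w) => H.
have := H k l ks ls kl.
have [x1 x2 Dx] := occ_nth ks.
have [y1 y2 Dy] := occ_nth ls.
set x := nth d0 _ k in x1 x2 Dx *; set y := nth d0 _ l in y1 y2 Dy *.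
rewrite /lexlt => /orP[lt|/andP[/eqP e lt]].
  split => //; case: (ltnP x.2 y.2) => // ge.
  have [e _] := nest x2 Dx Dy (ltnW lt) ge; by move: lt; rewrite e ltnn.
have [_ e'] := nest y2 Dy Dx (eq_leq (esym e)) (ltnW lt); by move: lt; rewrite e' ltnn.
Qed.

Lemma idx w z : z \in occs L w ->
  z = nth d0 (occs L w) (index z (occs L w)) /\ index z (occs L w) < size (occs L w).
Proof. by move=> zin; rewrite nth_index // index_mem. Qed.

Lemma gap_L w k : k.+1 < size (occs L w) ->
  L (factor w (nth d0 (occs L w) k).1.+1 (nth d0 (occs L w) k.+1).2.-1).
Proof.
move=> ks.
have ks' : k < size (occs L w) by lia.
have [x1 x2 Dx] := occ_nth ks'.
have [y1 y2 Dy] := occ_nth ks.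
have [o1 o2] := ordered (ltnSn k) ks.
case Lg: (L _) => //; exfalso.
have ab : (nth d0 (occs L w) k).1.+1 < (nth d0 (occs L w) k.+1).2.-1 by lia.
have bs : (nth d0 (occs L w) k.+1).2.-1 <= size w by lia.
have [i [j [h1 h2 h3 h4]]] := exists_occ ab bs (negbT Lg).
have zin : (i, j) \in occs L w by rewrite mem_occs h3 h4 /=; lia.
have [ez lz] := idx zin.
set l := index _ _ in ez lz.
case: (ltngtP l k) => c.
- have [] := ordered c ks'; rewrite -ez /=; lia.
- case: (ltngtP l k.+1) => c'.
  + lia.
  + have [] := ordered c' lz; rewrite -ez /=; lia.
  + by move: ez; rewrite c' => /(congr1 snd) /=; lia.
- by move: ez; rewrite c => /(congr1 fst) /=; lia.
Qed.

Lemma first_L w : 0 < size (occs L w) ->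
  L (factor w 0 (nth d0 (occs L w) 0).2.-1).
Proof.
move=> ks.
have [x1 x2 Dx] := occ_nth ks.
case Lg: (L _) => //; exfalso.
have ab : 0 < (nth d0 (occs L w) 0).2.-1 by lia.
have bs : (nth d0 (occs L w) 0).2.-1 <= size w by lia.
have [i [j [h1 h2 h3 h4]]] := exists_occ ab bs (negbT Lg).
have zin : (i, j) \in occs L w by rewrite mem_occs h3 h4 /=; lia.
have [ez lz] := idx zin.
set l := index _ _ in ez lz.
case: (posnP l) => c.
- by move: ez; rewrite c => /(congr1 snd) /=; lia.
- have [] := ordered c lz; rewrite -ez /=; lia.
Qed.

Lemma last_L w : 0 < size (occs L w) ->
  L (factor w (nth d0 (occs L w) (size (occs L w)).-1).1.+1 (size w)).
Proof.
move=> ks.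
have ks' : (size (occs L w)).-1 < size (occs L w) by lia.
have [x1 x2 Dx] := occ_nth ks'.
case Lg: (L _) => //; exfalso.
have ab : (nth d0 (occs L w) (size (occs L w)).-1).1.+1 < size w by lia.
have [i [j [h1 h2 h3 h4]]] := exists_occ ab (leqnn _) (negbT Lg).
have zin : (i, j) \in occs L w by rewrite mem_occs h3 h4 /=; lia.
have [ez lz] := idx zin.
set l := index _ _ in ez lz.
case: (ltngtP l (size (occs L w)).-1) => c.
- have [] := ordered c ks'; rewrite -ez /=; lia.
- lia.
- by move: ez; rewrite c => /(congr1 fst) /=; lia.
Qed.

Lemma occs_ne w : w <> [::] -> ~~ L w -> 0 < size (occs L w).
Proof.
move=> ne nL.
have ab : 0 < size w by move: ne; case: (w).
have nL' : ~~ L (factor w 0 (size w)) by rewrite factor_all.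
have [i [j [h1 h2 h3 h4]]] := exists_occ ab (leqnn _) nL'.
have zin : (i, j) \in occs L w by rewrite mem_occs h3 h2 h4.
by case: (occs L w) zin.
Qed.

End Comb.


Section ThueGen.
Variable T : Type.
Variable R : seq T -> seq T -> Prop.
Lemma thue_cong p q u v : thue R u v -> thue R (p ++ u ++ q) (p ++ v ++ q).
Proof.
elim=> {u v} [u|u v _ IH|u v w' _ IH1 _ IH2|p' q' u v H].
- exact: thue_refl.
- exact: thue_sym.
- exact: thue_trans IH2.
- by have := thue_step (p ++ p') (q' ++ q) H; rewrite -!catA.
Qed.
Global Instance thue_Eq : Equivalence (thue R).
Proof. split; [exact: thue_refl | exact: thue_sym | exact: thue_trans]. Qed.
Global Instance cat_Prop : Proper (thue R ==> thue R ==> thue R) (@cat T).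
Proof.
move=> a b Hab c d Hcd.
apply: (thue_trans (v := b ++ c)).
  by have := thue_cong [::] c Hab; rewrite /= .
by have := thue_cong b [::] Hcd; rewrite !cats0.
Qed.
Lemma thue_catr u v q : thue R u v -> thue R (u ++ q) (v ++ q).
Proof. by move=> H; have := thue_cong [::] q H. Qed.
Lemma thue_catl u v p : thue R u v -> thue R (p ++ u) (p ++ v).
Proof. by move=> H; have := thue_cong p [::] H; rewrite !cats0. Qed.
Lemma thue_R u v : R u v -> thue R u v.
Proof. by move=> H; have := thue_step [::] [::] H; rewrite /= !cats0. Qed.
End ThueGen.

Fixpoint mids (A : Type) (w : seq A) (t : seq (nat * nat)) : seq (seq A) :=
  match t with
  | [::] => [::]
  | x :: t' => factor w x.1 x.2 ::
      match t' with [::] => [::] | y :: _ => factor w x.1.+1 y.2.-1 :: mids w t' end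
  end.

Lemma flat_zip (A : Type) (w : seq A) (t : seq (nat * nat)) z : t <> [::] ->
  flatten [seq [:: p.1; p.2] | p <- zip (z :: [seq factor w p.1.1.+1 p.2.2.-1 | p <- zip t (behead t)])
                                    [seq factor w ij.1 ij.2 | ij <- t]] = z :: mids w t.
Proof.
elim: t z => [|x [|y t] IH] z // _.
have := IH (factor w x.1.+1 y.2.-1) ltac:(by []).
by rewrite /= => ->.
Qed.

Lemma sc_mid_mids (A : Type) (L : pred (seq A)) w : occs L w <> [::] ->
  sc_mid L w = mids w (occs L w).
Proof. by move=> ne; rewrite /sc_mid /sc_gaps /sc_dd flat_zip. Qed.

Section Main.
Variables (A AG : Type) (G : groupType).
Variable RG : seq AG -> seq AG -> Prop.
Variable gen : AG -> G.
Hypothesis Hpres : forall u v : seq AG, u <> [::] -> v <> [::] ->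
             (evG gen u = evG gen v <-> thue RG u v).
Variable rep : G -> seq AG.
Hypothesis Hrep : forall g : G, rep g <> [::] /\ evG gen (rep g) = g.
Variable L : pred (seq A).
Hypothesis HL0 : ~~ L [::].
Hypothesis HLfact : forall x y z : seq A, y <> [::] -> L (x ++ y ++ z) -> L y.
Hypothesis HLA : forall a : A, L [:: a].
Variable f : seq A -> G.

Local Notation R := (RT L f rep RG).
Local Notation XX := (X A AG).
Local Notation inrX := (@inr A AG).
Local Notation inlX := (@inl A AG).

Lemma prodG_cat (s1 s2 : seq G) : prodG (s1 ++ s2) = (prodG s1 * prodG s2)%g.
Proof. by elim: s1 => [|x s IH] /=; rewrite ?mul1g // IH mulgA. Qed.

Lemma prodG_rcons (s : seq G) x : prodG (rcons s x) = (prodG s * x)%g.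
Proof. by rewrite -cats1 prodG_cat /= mulg1. Qed.

Lemma evG_cat a b : evG gen (a ++ b) = (evG gen a * evG gen b)%g.
Proof. by rewrite /evG map_cat prodG_cat. Qed.

Lemma rep_ne g : rep g <> [::]. Proof. by case: (Hrep g). Qed.
Lemma evG_rep g : evG gen (rep g) = g. Proof. by case: (Hrep g). Qed.

Lemma lift_RG u v : thue RG u v -> thue R (map inrX u) (map inrX v).
Proof.
elim=> {u v} [u|u v _ IH|u v w' _ IH1 _ IH2|p q u v H].
- exact: thue_refl.
- exact: thue_sym.
- exact: thue_trans IH2.
- rewrite !map_cat; apply: thue_step; left; by exists u, v.
Qed.

Lemma grp_eq a b : a <> [::] -> b <> [::] -> evG gen a = evG gen b ->
  thue R (map inrX a) (map inrX b).
Proof. by move=> na nb e; apply: lift_RG; apply/Hpres. Qed.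

Lemma cat_ne (T : Type) (a b : seq T) : a <> [::] -> a ++ b <> [::].
Proof. by case: a. Qed.
Lemma cat_ne' (T : Type) (a b : seq T) : b <> [::] -> a ++ b <> [::].
Proof. by case: a. Qed.

Lemma sandwich a b g : a <> [::] -> b <> [::] -> L g ->
  thue R (map inrX a ++ map inlX g ++ map inrX b) (map inrX (a ++ rep (f g) ++ b)).
Proof.
move=> na nb Lg.
have ea : thue R (map inrX a) (map inrX (a ++ rep 1%g)).
  by apply: grp_eq => //; [exact: cat_ne | rewrite evG_cat evG_rep mulg1].
have eb : thue R (map inrX b) (map inrX (rep 1%g ++ b)).
  by apply: grp_eq => //; [exact: cat_ne' | rewrite evG_cat evG_rep mul1g].
rewrite {1}ea {1}eb !map_cat -!catA.
have := thue_step (map inrX a) (map inrX b)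
  (_ : R (map inrX (rep 1%g) ++ map inlX g ++ map inrX (rep 1%g)) (map inrX (rep (f g)))).
rewrite -!catA; apply; right; left; by exists g.
Qed.

Lemma sandwich_r a b g rest : a <> [::] -> b <> [::] -> L g ->
  thue R (map inrX a ++ map inlX g ++ map inrX b ++ rest) (map inrX (a ++ rep (f g) ++ b) ++ rest).
Proof. by move=> na nb Lg; have := thue_catr rest (sandwich na nb Lg); rewrite -!catA. Qed.

Lemma Lstep x : Ldd L x ->
  thue R (map inlX x) (map inlX (w_alpha x) ++ map inrX (rep (f x)) ++ map inlX (w_omega x)).
Proof. by move=> D; apply: thue_R; right; right; exists x. Qed.

Lemma stepA w (x : nat * nat) : x.1.+1 < x.2 -> x.2 <= size w -> Ldd L (factor w x.1 x.2) ->
  thue R (map inlX (drop x.1 w))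
   (map inlX (factor w x.1 x.2.-1) ++ map inrX (rep (f (factor w x.1 x.2))) ++ map inlX (drop x.1.+1 w)).
Proof.
move=> x1 x2 D.
have le : x.1 <= x.2 by lia.
rewrite (@drop_factor _ w x.1 x.2 le) map_cat (Lstep D) factor_alpha //; last by lia.
rewrite factor_omega; last by lia.
rewrite -!catA -map_cat -drop_factor; [reflexivity | lia].
Qed.

Definition Rg w (p q : nat * nat) :=
  (p.1 < q.1) && (p.2 < q.2) && L (factor w p.1.+1 q.2.-1).
Definition okp w (y : nat * nat) :=
  (y.1.+1 < y.2) && (y.2 <= size w) && Ldd L (factor w y.1 y.2).

Lemma achain w t x : all (okp w) (x :: t) -> path (Rg w) x t ->
  thue R (map inlX (drop x.1 w))
   (map inlX (factor w x.1 x.2.-1) ++ map inrX (rep (prodG (map f (mids w (x :: t)))))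
     ++ map inlX (drop (last x t).1.+1 w)).
Proof.
elim: t x => [|y t IH] x.
  move=> /andP[/andP[/andP[x1 x2] D] _] _.
  have -> : prodG (map f (mids w [:: x])) = f (factor w x.1 x.2) by rewrite /= mulg1.
  exact: stepA.
move=> /andP[/andP[/andP[x1 x2] D] Hall] /andP[/andP[/andP[o1 o2] Lg] Hp].
have Hy : y.1.+1 < y.2 by case/andP: Hall => /andP[/andP[]].
have eP : prodG (map f (mids w (x :: y :: t))) =
  (f (factor w x.1 x.2) * (f (factor w x.1.+1 y.2.-1) * prodG (map f (mids w (y :: t)))))%g by [].
have eL : last x (y :: t) = last y t by [].
rewrite eP eL (stepA x1 x2 D).
rewrite (@drop_factor _ w x.1.+1 y.1); last by lia.
rewrite map_cat (IH y Hall Hp).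
rewrite [map inlX (factor w x.1.+1 y.1) ++ _]catA.
rewrite -map_cat factor_cat; last by lia.
rewrite sandwich_r //; try exact: rep_ne.
apply: thue_catl; apply: thue_catr; apply: grp_eq.
- by apply: cat_ne; exact: rep_ne.
- exact: rep_ne.
- by rewrite !evG_cat !evG_rep.
Qed.

Local Notation d0 := (0, 0).

Lemma alem w : w <> [::] -> ~~ L w ->
  [/\ L (sc_first L w), L (sc_last L w) &
   thue R (map inlX w) (map inlX (sc_first L w) ++ map inrX (rep (gw L f w)) ++ map inlX (sc_last L w))].
Proof.
move=> ne nL.
have ks := occs_ne HL0 HLA ne nL.
have Lf := first_L HL0 HLfact HLA ks.
have Ll := last_L HL0 HLfact HLA ks.
have ks' : (size (occs L w)).-1 < size (occs L w) by lia.
have eL : last d0 (occs L w) = nth d0 (occs L w) (size (occs L w)).-1 by rewrite nth_last.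
have Hne : occs L w <> [::] by case: (occs L w) ks.
split.
- exact: Lf.
- by rewrite /sc_last eL.
rewrite /gw sc_mid_mids // /sc_first /sc_last.
have Hall : all (okp w) (occs L w).
  apply/allP => z zin; have [h1 h2 h3] := occ_prop HL0 HLA zin.
  by rewrite /okp h1 h2 h3.
have Hpath : forall k, k.+1 < size (occs L w) ->
   Rg w (nth d0 (occs L w) k) (nth d0 (occs L w) k.+1).
  move=> k kk; have [o1 o2] := ordered HL0 HLfact HLA (ltnSn k) kk.
  by rewrite /Rg o1 o2 (gap_L HL0 HLfact HLA kk).
have Hfirst := Lf.
move: Hall Hpath Hfirst; case: (occs L w) Hne => [//|x t] _ Hall Hpath Hfirst.
have Hp : path (Rg w) x t.
  apply/(pathP d0) => i it.
  exact: (Hpath i).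
rewrite -{1}(cat_take_drop x.1 w) map_cat (achain Hall Hp) /=.
have Hx : x.1.+1 < x.2 by case/andP: Hall => /andP[/andP[]].
have -> : take x.1 w = factor w 0 x.1 by rewrite /factor subn0 drop0.
rewrite !catA -map_cat factor_cat; last by lia.
rewrite -!catA factor_end; reflexivity.
Qed.

Lemma flat_cat (s1 s2 : seq (tok A G)) : flat rep (s1 ++ s2) = flat rep s1 ++ flat rep s2.
Proof. by rewrite /flat map_cat flatten_cat. Qed.
Lemma flat_cons (t : tok A G) s : flat rep (t :: s) = flat rep [:: t] ++ flat rep s.
Proof. by rewrite -flat_cat. Qed.
Lemma flat_inl (u : seq A) : flat rep (map (@inl A G) u) = map inlX u.
Proof. by elim: u => [|a u IH] //; rewrite /= flat_cons IH. Qed.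
Lemma flat_inr (g : G) : flat rep [:: inr g] = map inrX (rep g).
Proof. by rewrite /flat /= cats0. Qed.

Lemma merge_thue s : thue R (flat rep s) (flat rep (Defs.merge s)).
Proof.
elim: s => [|x s IH]; first reflexivity.
case: x => [a|g].
  by rewrite /= flat_cons [flat rep (_ :: Defs.merge s)]flat_cons IH; reflexivity.
rewrite /=; case E: (Defs.merge s) => [|[a|h] r]; rewrite E in IH.
- by rewrite flat_cons IH [flat rep [::]]/= cats0; reflexivity.
- by rewrite flat_cons IH -flat_cons; reflexivity.
- rewrite flat_cons IH (flat_cons (inr h)) (flat_cons (inr (g * h)%g)) !flat_inr catA -map_cat.
  apply: thue_catr; apply: grp_eq; try exact: rep_ne.
  + exact/cat_ne/rep_ne.
  + by rewrite evG_cat !evG_rep.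
Qed.

Lemma nilp_ne (T : Type) (u : seq T) : ~~ nilp u -> u <> [::].
Proof. by case: u. Qed.

Lemma grave_lem u0 y : y <> [::] ->
  thue R (map inlX u0 ++ map inrX y) (flat rep (fgrave_tok L f u0) ++ map inrX y).
Proof.
move=> ny; rewrite /fgrave_tok; case: ifP => H.
  by rewrite flat_inl; reflexivity.
move/norP: H => [ne nL]; have ne' := nilp_ne ne.
case: (alem ne' nL) => Lf Ll Ht.
rewrite Ht flat_cat flat_inl flat_inr -?catA sandwich //; last exact: rep_ne.
rewrite -[map inrX (rep _) ++ map inrX y]map_cat; apply: thue_catl; apply: grp_eq; try exact/cat_ne/rep_ne.
by rewrite !evG_cat !evG_rep mulgA.
Qed.

Lemma acute_lem un y : y <> [::] ->
  thue R (map inrX y ++ map inlX un) (map inrX y ++ flat rep (facute_tok L f un)).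
Proof.
move=> ny; rewrite /facute_tok; case: ifP => H.
  by rewrite flat_inl; reflexivity.
move/norP: H => [ne nL]; have ne' := nilp_ne ne.
case: (alem ne' nL) => Lf Ll Ht.
rewrite Ht flat_cat flat_inl flat_inr -?catA sandwich_r //; last exact: rep_ne.
rewrite [map inrX y ++ _]catA -[map inrX y ++ _]map_cat.
apply: thue_catr; apply: grp_eq; try by apply: cat_ne.
by rewrite !evG_cat !evG_rep mulgA.
Qed.

Lemma sand_hat a b u : a <> [::] -> b <> [::] -> u <> [::] ->
  thue R (map inrX a ++ map inlX u ++ map inrX b) (map inrX (a ++ rep (fhat L f u) ++ b)).
Proof.
move=> na nb ne; case Lu: (L u).
  have -> : fhat L f u = f u.
    by rewrite /fhat; case: u ne Lu => // a' u' _ Lu; rewrite /sc Lu /= mulg1.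
  exact: sandwich.
case: (alem ne (negbT Lu)) => Lf Ll Ht.
rewrite Ht -?catA sandwich_r //; last exact: rep_ne.
rewrite sandwich //; last by apply: cat_ne.
apply: grp_eq; try by repeat apply: cat_ne.
have -> : fhat L f u = (f (sc_first L u) * (gw L f u * f (sc_last L u)))%g.
  rewrite /fhat; case: u ne Lu {Ht Lf Ll} => // a' u' _ Lu.
  by rewrite /sc Lu /= map_rcons prodG_rcons.
by rewrite !evG_cat !evG_rep !mulgA.
Qed.

Definition isl (r : seq A + seq AG) := if r is inl _ then true else false.
Definition nerun (r : seq A + seq AG) :=
  match r with inl u => ~~ nilp u | inr g => ~~ nilp g end.
Definition diffk (r r' : seq A + seq AG) := isl r != isl r'.
Definition unrun (rs : seq (seq A + seq AG)) : seq XX :=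
  flatten (map (fun r => match r with inl u => map inlX u | inr g => map inrX g end) rs).
Definition tk (r : seq A + seq AG) : tok A G :=
  match r with inl u => inr (fhat L f u) | inr g => inr (evG gen g) end.

Lemma mid_lem n m : size m <= n -> all nerun m -> sorted diffk m ->
  ~~ isl (head (inl [::]) m) -> ~~ isl (last (inl [::]) m) ->
  exists y, [/\ y <> [::], flat rep (map tk m) = map inrX y & thue R (unrun m) (map inrX y)].
Proof.
elim: n m => [|n IH] [|r m] //= sz.
case: r => [u|g] // /andP[neg Hall] Hs _.
case: m sz Hall Hs => [|[u|g'] m] sz Hall Hs Hlast.
- exists (rep (evG gen g)); split; first exact: rep_ne.
    by rewrite flat_inr.
  rewrite /unrun /= cats0; apply: grp_eq; [exact: nilp_ne | exact: rep_ne | by rewrite evG_rep].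
- case: m sz Hall Hs Hlast => [|r3 m] // sz /andP[neu Hall] /andP[_ /andP[Hd Hs]] Hlast.
  have Hr3 : ~~ isl r3 by move: Hd; rewrite /diffk; case: (r3).
  have sz' : size (r3 :: m) <= n by move: sz => /=; lia.
  have [y [ny Ey Ty]] := IH (r3 :: m) sz' Hall Hs Hr3 Hlast.
  exists (rep (evG gen g) ++ rep (fhat L f u) ++ y); split.
  + exact/cat_ne/rep_ne.
  + change (flat rep (inr (evG gen g) :: inr (fhat L f u) :: map tk (r3 :: m)) = map inrX (rep (evG gen g) ++ rep (fhat L f u) ++ y)).
    by rewrite flat_cons (flat_cons (inr (fhat L f u))) !flat_inr Ey !map_cat.
  + have -> : unrun [:: inr g, inl u, r3 & m] = map inrX g ++ map inlX u ++ unrun (r3 :: m) by [].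
    rewrite Ty sand_hat //; [|exact: nilp_ne|exact: nilp_ne].
    apply: grp_eq; try exact/cat_ne/nilp_ne; try exact/cat_ne/rep_ne.
    by rewrite !evG_cat !evG_rep.
- by case/andP: Hs.
Qed.

Lemma runs_spec (w : seq XX) :
  [/\ unrun (runs w) = w, all nerun (runs w) & sorted diffk (runs w)].
Proof.
elim: w => [|x w [IH1 IH2 IH3]]; first by [].
case: x => [a|b]; move: IH1 IH2 IH3; rewrite /=; case: (runs w) => [|[u|g] r].
- by move=> <-.
- move=> <- /andP[_ Ha] Hs; split => //=; try (by rewrite Ha).
  by case: r Hs {Ha}.
- by move=> <- Ha Hs; split => //=; rewrite ?Ha ?Hs.
- by move=> <- Ha Hs; split => //=; rewrite ?Ha ?Hs.
- by move=> <- Ha Hs; split => //=; try exact: Ha; try exact: Hs.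
- move=> <- /andP[_ Ha] Hs; split => //=; try (by rewrite Ha).
  by case: r Hs {Ha}.
Qed.

Lemma all_isl rs : all isl rs -> all (@is_letterA A AG) (unrun rs).
Proof.
elim: rs => [|[u|g] rs IH] //= /IH H.
rewrite /unrun /= all_cat H andbT.
by elim: u => [|a u IHu].
Qed.

Definition u0_of (rs : seq (seq A + seq AG)) := if rs is inl u :: _ then u else [::].
Definition rs1_of (rs : seq (seq A + seq AG)) := if rs is inl _ :: r then r else rs.
Definition un_of (rs1 : seq (seq A + seq AG)) := if rev rs1 is inl u :: _ then u else [::].
Definition mid_of (rs1 : seq (seq A + seq AG)) := if rev rs1 is inl _ :: r then rev r else rs1.

Lemma mainlem rs : all nerun rs -> sorted diffk rs -> ~~ all isl rs ->
  thue R (unrun rs) (flat rep (Defs.merge (fgrave_tok L f (u0_of rs) ++ map tk (mid_of (rs1_of rs))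
                                  ++ facute_tok L f (un_of (rs1_of rs))))).
Proof.
move=> Ha Hs Hn.
apply: thue_trans (merge_thue _).
have [e1 [a1 s1 h1]] : unrun rs = map inlX (u0_of rs) ++ unrun (rs1_of rs) /\
   [/\ all nerun (rs1_of rs), sorted diffk (rs1_of rs) & ~~ isl (head (inl [::]) (rs1_of rs))].
  case: rs Ha Hs Hn => [|[u|g] r] //.
  - move=> /andP[_ Ha] Hs Hn; split => //.
    case: r Ha Hs Hn => [|r1 r'] //= Ha /andP[Hd Hs] Hn; split => //.
move: e1; move: (rs1_of rs) a1 s1 h1 => s a1 s1 h1 e1.
have [e2 [a2 s2 h2 l2]] : unrun s = unrun (mid_of s) ++ map inlX (un_of s) /\
   [/\ all nerun (mid_of s), sorted diffk (mid_of s), ~~ isl (head (inl [::]) (mid_of s))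
     & ~~ isl (last (inl [::]) (mid_of s))].
  move: a1 s1 h1; clear e1; case/lastP: s => [|r z] // a1 s1 h1.
  rewrite /mid_of /un_of rev_rcons; case: z a1 s1 h1 => [u|g] a1 s1 h1.
  - rewrite revK; split.
      by rewrite /unrun -cats1 map_cat flatten_cat /= cats0.
    case: r a1 s1 h1 => [|r1 r'] // a1 s1 h1.
    move: a1 => /= /andP[n1]; rewrite all_rcons => /andP[_ a'].
    move: s1 => /=; rewrite rcons_path => /andP[p Hd].
    split => //=; first by rewrite n1 a'.
    by move: Hd; rewrite /diffk; case: (last r1 r').
  - split; first by rewrite cats0.
    by split => //; rewrite last_rcons.
have [y [ny Ey Ty]] := mid_lem (leqnn _) a2 s2 h2 l2.
rewrite e1 e2 Ty !flat_cat Ey.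
rewrite [map inlX (u0_of rs) ++ _]catA (grave_lem _ ny) -catA (acute_lem _ ny); reflexivity.
Qed.

Lemma final (w : seq XX) : w <> [::] -> thue R w (fcheck L f gen rep w).
Proof.
move=> Hw; rewrite /fcheck; case: ifP => Hall.
  have ew : map inlX (flatten (map (@letterA A AG) w)) = w.
    by elim: w {Hw} Hall => [|[a|b] w IH] //= /IH {2}<-.
  have nv : flatten (map (@letterA A AG) w) <> [::].
    by move=> e; apply: Hw; rewrite -ew e.
  apply: thue_trans (merge_thue _).
  move: nv ew; move: (flatten _) => v nv ew.
  rewrite -{1}ew /fcheckA_tok; case: ifP => Lv.
    by rewrite flat_inl; reflexivity.
  case: (alem nv (negbT Lv)) => Lf Ll Ht.
  by rewrite Ht !flat_cat !flat_inl flat_inr; reflexivity.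
have [e1 e2 e3] := runs_spec w.
have Hn : ~~ all isl (runs w).
  by apply: contraFN Hall => /all_isl; rewrite e1.
have := mainlem e2 e3 Hn; rewrite e1 => H.
exact: H.
Qed.

End Main.


Theorem lemma2
  (A AG : Type) (G : groupType)
  (* semigroup presentation <A_G | R_G> of G *)
  (RG : seq AG -> seq AG -> Prop) (gen : AG -> G)
  (HRG : forall u v, RG u v -> u <> [::] /\ v <> [::])
  (Hpres : forall u v : seq AG, u <> [::] -> v <> [::] ->
             (evG gen u = evG gen v <-> thue RG u v))
  (* fixed representative words *)
  (rep : G -> seq AG)
  (Hrep : forall g : G, rep g <> [::] /\ evG gen (rep g) = g)
  (* nonempty factorial language L \subseteq A^+ containing A *)
  (L : pred (seq A))
  (HLne : exists w, L w)
  (HL0 : ~~ L [::])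
  (HLfact : forall x y z : seq A, y <> [::] -> L (x ++ y ++ z) -> L y)
  (HLA : forall a : A, L [:: a])
  (f : seq A -> G)
  (w : seq (X A AG)) (Hw : w <> [::]) :
  thue (RT L f rep RG) w (fcheck L f gen rep w).
Proof. exact: (final Hpres Hrep HL0 HLfact HLA f Hw). Qed.
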